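(* Let $p$ be a prime and $A$ a commutative nilpotent $\mathbb{F}_p$-algebra of dimension $n$ with $A^p=0$; let $e$ be the integer with $A^e\ne0$, $A^{e+1}=0$. Let $i(A)$ be the number of ideals of $A$ and $s(A)$ the number of $\mathbb{F}_p$-subspaces of $A$. (1) If $e=2$, $p\ge3$ and $n\ge3$, then $i(A)\le \frac{2}{p}s(A)$. (2) If $e=3$, $p\ge3$ and $n\ge4$, then $i(A)\le\frac{2}{p^2}s(A)$.
   Context: Algebras are commutative, associative, not necessarily unital. *)

(* Defs.v *)
From HB Require Import structures.
From mathcomp Require Import all_boot all_order all_algebra.
Set Implicit Arguments. Unset Strict Implicit. Unset Printing Implicit Defensive.
Import Order.TTheory GRing.Theory Num.Theory.
Local Open Scope ring_scope.

(* An n-dimensional F_p-vector space is modelled as V := 'rV['F_p]_n. *)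
Definition is_comm_alg (p n : nat)
  (mul : 'rV['F_p]_n -> 'rV['F_p]_n -> 'rV['F_p]_n) : Prop :=
  [/\ (forall (a : 'F_p) (x y z : 'rV['F_p]_n),
          mul (a *: x + y) z = a *: mul x z + mul y z),
      (forall x y, mul x y = mul y x) &
      (forall x y z, mul x (mul y z) = mul (mul x y) z)].

Definition alg_pow (p n : nat)
  (mul : 'rV['F_p]_n -> 'rV['F_p]_n -> 'rV['F_p]_n) (k : nat)
  : {vspace 'rV['F_p]_n} :=
  (<< [seq foldl mul x (tval s) | x <- enum 'rV['F_p]_n,
                                   s <- enum [set: (k.-1).-tuple 'rV['F_p]_n]] >>)%VS.

Definition is_subspace (p n : nat) (U : {set 'rV['F_p]_n}) : bool :=
  [&& 0 \in U,
      [forall x in U, forall y in U, x + y \in U] &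
      [forall a : 'F_p, forall x in U, a *: x \in U]].

Definition is_ideal (p n : nat)
  (mul : 'rV['F_p]_n -> 'rV['F_p]_n -> 'rV['F_p]_n)
  (U : {set 'rV['F_p]_n}) : bool :=
  is_subspace U && [forall a, forall u in U, mul a u \in U].

Definition num_subspaces (p n : nat) : nat :=
  #|[set U : {set 'rV['F_p]_n} | is_subspace U]|.

Definition num_ideals (p n : nat)
  (mul : 'rV['F_p]_n -> 'rV['F_p]_n -> 'rV['F_p]_n) : nat :=
  #|[set U : {set 'rV['F_p]_n} | is_ideal mul U]|.

(* Main.v *)
Require Import Defs.
From HB Require Import structures.
From mathcomp Require Import zify ring.
From mathcomp Require Import all_boot all_order all_algebra.
Set Implicit Arguments. Unset Strict Implicit. Unset Printing Implicit Defensive.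
Import Order.TTheory GRing.Theory Num.Theory.
Local Open Scope ring_scope.

Section Gen.
Variables (F : finFieldType) (n : nat).
Local Notation V := 'rV[F]_n.

Definition gsub (U : {set V}) : bool :=
  [&& 0 \in U, [forall x in U, forall y in U, x + y \in U] &
      [forall a : F, forall x in U, a *: x \in U]].

Lemma gsubP U : gsub U ->
  [/\ 0 \in U, (forall x y, x \in U -> y \in U -> x + y \in U) &
      (forall (a : F) x, x \in U -> a *: x \in U)].
Proof.
case/and3P=> h0 /forall_inP hD /forallP hZ; split=> //.
  by move=> x y hx hy; move/forall_inP: (hD x hx); apply.
by move=> a x hx; move/forall_inP: (hZ a); apply.
Qed.

Lemma gsubI (U : {set V}) : [/\ 0 \in U, (forall x y, x \in U -> y \in U -> x + y \in U) &
      (forall (a : F) x, x \in U -> a *: x \in U)] -> gsub U.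
Proof.
case=> h0 hD hZ; apply/and3P; split=> //.
  by apply/forall_inP=> x hx; apply/forall_inP=> y hy; apply: hD.
by apply/forallP=> a; apply/forall_inP=> x hx; apply: hZ.
Qed.

Lemma gsub0 U : gsub U -> 0 \in U. Proof. by case/gsubP. Qed.
Lemma gsubD U x y : gsub U -> x \in U -> y \in U -> x + y \in U.
Proof. by case/gsubP=> _ h _; apply: h. Qed.
Lemma gsubZ U (a : F) x : gsub U -> x \in U -> a *: x \in U.
Proof. by case/gsubP=> _ _ h; apply: h. Qed.
Lemma gsubN U x : gsub U -> x \in U -> - x \in U.
Proof. by move=> hU hx; rewrite -scaleN1r gsubZ. Qed.
Lemma gsubB U x y : gsub U -> x \in U -> y \in U -> x - y \in U.
Proof. by move=> hU hx hy; rewrite gsubD // gsubN. Qed.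
Lemma gsubDr U x y : gsub U -> x \in U -> x + y \in U -> y \in U.
Proof. by move=> hU hx hxy; rewrite -(addKr x y) gsubD ?gsubN. Qed.

Lemma gsubI2 U W : gsub U -> gsub W -> gsub (U :&: W).
Proof.
move=> hU hW; apply: gsubI; split.
- by rewrite inE !gsub0.
- by move=> x y; rewrite !inE => /andP[? ?] /andP[? ?]; rewrite !gsubD.
- by move=> a x; rewrite !inE => /andP[? ?]; rewrite !gsubZ.
Qed.

Lemma gsub_set0 : gsub [set 0 : V].
Proof.
apply: gsubI; split; first by rewrite inE.
- by move=> x y; rewrite !inE => /eqP-> /eqP->; rewrite addr0.
- by move=> a x; rewrite !inE => /eqP->; rewrite scaler0.
Qed.

Definition imgm (M : 'M[F]_n) (U : {set V}) : {set V} := [set u *m M | u in U].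

Lemma gsub_img M U : gsub U -> gsub (imgm M U).
Proof.
move=> hU; apply: gsubI; split.
- by apply/imsetP; exists 0; rewrite ?mul0mx ?gsub0.
- move=> _ _ /imsetP[x hx ->] /imsetP[y hy ->].
  by apply/imsetP; exists (x + y); rewrite ?mulmxDl ?gsubD.
- move=> a _ /imsetP[x hx ->].
  by apply/imsetP; exists (a *: x); rewrite ?scalemxAl ?gsubZ.
Qed.

Lemma imgm_inj M : row_free M -> injective (imgm M).
Proof.
move=> hM U W hUW; apply/setP=> x.
have hinj : injective (fun u : V => u *m M) by apply: row_free_inj.
apply/idP/idP=> hx.
  have : x *m M \in imgm M W by rewrite -hUW; apply: imset_f.
  by case/imsetP=> y hy /hinj ->.
have : x *m M \in imgm M U by rewrite hUW; apply: imset_f.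
by case/imsetP=> y hy /hinj ->.
Qed.

Lemma mem_imgm M (U : {set V}) u : u \in U -> u *m M \in imgm M U.
Proof. by move=> hu; apply: imset_f. Qed.

End Gen.


Section DC.
Variables (F : finFieldType) (n : nat).
Local Notation V := 'rV[F]_n.
Variable T : V -> V.
Hypothesis hT : forall (a : F) x y, T (a *: x + y) = a *: T x + T y.
Variable P : {set V}.
Hypothesis hP : gsub P.
Hypothesis hTP : forall x, x \in P -> T x \in P.

Lemma T0 : T 0 = 0.
Proof. by have := hT 1 0 0; rewrite scaler0 scale1r !addr0 => /(congr1 (fun z => z - T 0)); rewrite subrr addrK. Qed.
Lemma TD x y : T (x + y) = T x + T y.
Proof. by have := hT 1 x y; rewrite !scale1r. Qed.
Lemma TZ (a : F) x : T (a *: x) = a *: T x.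
Proof. by rewrite -[a *: x]addr0 hT T0 addr0. Qed.
Lemma TN x : T (- x) = - T x.
Proof. by rewrite -scaleN1r TZ scaleN1r. Qed.
Lemma TB x y : T (x - y) = T x - T y.
Proof. by rewrite TD TN. Qed.

Definition Inv : {set {set V}} := [set U | gsub U && [forall u in U, T u \in U]].
Definition S0 : {set {set V}} :=
  [set U | [&& gsub U, U :&: P == [set 0] & U != [set 0]]].
Definition Ecal : {set 'M[F]_n} :=
  [set E | [forall v, v *m E \in P] && [forall y in P, y *m E == 0]].

Lemma EcalP E : E \in Ecal -> (forall v, v *m E \in P) /\ (forall y, y \in P -> y *m E = 0).
Proof.
by rewrite inE => /andP[/forallP h1 /forall_inP h2]; split=> // y /h2 /eqP.
Qed.

Lemma EcalI E : (forall v, v *m E \in P) -> (forall y, y \in P -> y *m E = 0) -> E \in Ecal.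
Proof.
move=> h1 h2; rewrite inE; apply/andP; split; first by apply/forallP.
by apply/forall_inP=> y /h2 ->.
Qed.

Lemma Ecal0 : 0 \in Ecal.
Proof. by apply: EcalI=> [v|y _]; rewrite mulmx0 ?gsub0. Qed.

Lemma EcalD E E' : E \in Ecal -> E' \in Ecal -> E + E' \in Ecal.
Proof.
move=> /EcalP[h1 h2] /EcalP[h1' h2']; apply: EcalI=> [v|y hy].
  by rewrite mulmxDr gsubD.
by rewrite mulmxDr h2 // h2' // addr0.
Qed.

Lemma EcalN E : E \in Ecal -> - E \in Ecal.
Proof.
move=> /EcalP[h1 h2]; apply: EcalI=> [v|y hy].
  by rewrite mulmxN gsubN.
by rewrite mulmxN h2 // oppr0.
Qed.

Lemma EcalB E E' : E \in Ecal -> E' \in Ecal -> E - E' \in Ecal.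
Proof. by move=> h h'; rewrite EcalD ?EcalN. Qed.

Lemma Ecal_mul E E' : E \in Ecal -> E' \in Ecal -> E *m E' = 0.
Proof.
move=> /EcalP[h1 _] /EcalP[_ h2']; apply/row_matrixP=> i.
by rewrite row_mul row0 h2' // rowE h1.
Qed.

Lemma Ecal_unit E : E \in Ecal -> row_free (1%:M + E).
Proof.
move=> hE; rewrite row_free_unit.
have h : (1%:M + E) *m (1%:M - E) = 1%:M.
  by rewrite mulmxDl mul1mx mulmxBr mulmx1 (Ecal_mul hE hE) subr0 subrK.
by case: (mulmx1_unit h).
Qed.

Lemma imgm_comp (A B : 'M[F]_n) (U : {set V}) :
  imgm A (imgm B U) = imgm (B *m A) U.
Proof.
apply/setP=> y; apply/imsetP/imsetP.
  by case=> _ /imsetP[u hu ->] ->; exists u; rewrite ?mulmxA.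
by case=> u hu ->; exists (u *m B); rewrite ?mulmxA // mem_imgm.
Qed.

Lemma imgm1 (U : {set V}) : imgm 1%:M U = U.
Proof.
apply/setP=> y; apply/imsetP/idP.
  by case=> u hu ->; rewrite mulmx1.
by move=> hy; exists y; rewrite ?mulmx1.
Qed.

Lemma S0P U : U \in S0 ->
  [/\ gsub U, (forall y, y \in U -> y \in P -> y = 0) & exists2 u, u \in U & u != 0].
Proof.
rewrite inE => /and3P[hU /eqP hUP hU0]; split=> //.
  move=> y hy hyP; have : y \in U :&: P by rewrite inE hy hyP.
  by rewrite hUP inE => /eqP.
case: (pickP [pred u | (u \in U) && (u != 0)]) => [u /andP[hu hu0]|hnone].
  by exists u.
case/negP: hU0; apply/eqP/setP=> y; rewrite inE; apply/idP/eqP; last first.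
  by move->; rewrite gsub0.
move=> hy; have := hnone y; rewrite /= hy /= => /negbFE/eqP //.
Qed.

Lemma S0I U : gsub U -> (forall y, y \in U -> y \in P -> y = 0) ->
  (exists2 u, u \in U & u != 0) -> U \in S0.
Proof.
move=> hU h0 [u hu hu0]; rewrite inE hU /=; apply/andP; split.
  apply/eqP/setP=> y; rewrite !inE; apply/andP/eqP.
    by case=> hy hyP; apply: h0.
  by move->; rewrite !gsub0.
apply/eqP=> hU0; move: hu; rewrite hU0 inE => /eqP hu'; by rewrite hu' eqxx in hu0.
Qed.

Lemma S0_img E U : E \in Ecal -> U \in S0 -> imgm (1%:M + E) U \in S0.
Proof.
move=> hE /S0P[hU h0 [u hu hu0]]; have [h1 h2] := EcalP hE.
apply: S0I; first exact: gsub_img.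
  move=> _ /imsetP[v hv ->]; rewrite mulmxDr mulmx1 => hP'.
  have hvP : v \in P by rewrite -(addrK (v *m E) v) gsubB.
  by rewrite (h0 v hv hvP) mul0mx addr0.
exists (u *m (1%:M + E)); first exact: mem_imgm.
apply: contra hu0 => /eqP h; apply/eqP; apply: (row_free_inj (Ecal_unit hE)).
by rewrite h mul0mx.
Qed.

Lemma InvP U : U \in Inv -> gsub U /\ (forall u, u \in U -> T u \in U).
Proof. by rewrite inE => /andP[h /forall_inP]. Qed.
Lemma InvI U : gsub U -> (forall u, u \in U -> T u \in U) -> U \in Inv.
Proof. by move=> h1 h2; rewrite inE h1; apply/forall_inP. Qed.

Lemma key_comm U0 D u0 : U0 \in Inv -> U0 \in S0 -> D \in Ecal ->
  imgm (1%:M + D) U0 \in Inv -> u0 \in U0 -> T (u0 *m D) = T u0 *m D.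
Proof.
move=> hI hS hD hW hu0.
have [hU0 hTU0] := InvP hI.
have [_ h0W _] := S0P (S0_img hD hS).
have [hWs hTW] := InvP hW.
have [h1 h2] := EcalP hD.
have e1 : T (u0 *m (1%:M + D)) \in imgm (1%:M + D) U0 by apply: hTW; apply: mem_imgm.
have e2 : T u0 *m (1%:M + D) \in imgm (1%:M + D) U0 by apply: mem_imgm; apply: hTU0.
have : T (u0 *m (1%:M + D)) - T u0 *m (1%:M + D) = T (u0 *m D) - T u0 *m D.
  by rewrite !mulmxDr !mulmx1 TD opprD addrACA subrr add0r.
move=> e3; apply/eqP; rewrite -subr_eq0; apply/eqP; rewrite -e3; apply: h0W.
  by rewrite gsubB.
by rewrite e3 gsubB // hTP.
Qed.

Lemma mulmx_cw (v : V) (w : 'cV[F]_n) (z : V) :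
  v *m (w *m z) = (v *m w) 0 0 *: z.
Proof. by rewrite mulmxA {1}[v *m w]mx11_scalar mul_scalar_mx. Qed.

Hypothesis hsep : forall v, v \notin P ->
  exists w : 'cV[F]_n, (forall y, y \in P -> y *m w = 0) /\ v *m w = 1%:M.
Variables (J : finType) (x : J -> V).
Hypothesis hxP : forall j, x j \in P.
Hypothesis hxinj : forall mu : F, injective (fun j => T (x j) - mu *: x j).

Lemma per_U U : U \in S0 ->
  (#|J| * #|[set E in Ecal | imgm (1%:M + E) U \in Inv]| <= #|Ecal|)%N.
Proof.
move=> hU; set A := [set E in Ecal | _].
case: (set_0Vmem A) => [-> | [E0 hE0]]; first by rewrite cards0 muln0.
move: hE0; rewrite inE => /andP[hE0 hI0].
set U0 := imgm (1%:M + E0) U.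
have hS0 : U0 \in S0 := S0_img hE0 hU.
have [_ h0U0 [u0 hu0 hu0nz]] := S0P hS0.
have hu0P : u0 \notin P by apply: contra hu0nz => h; rewrite (h0U0 _ hu0 h).
have [w [hw1 hw2]] := hsep hu0P.
set K := [set D in Ecal | T (u0 *m D) == T u0 *m D].
have h1 : (#|A| <= #|K|)%N.
  have inj : {in A &, injective (fun E => E - E0)} by move=> ? ? _ _ /addIr.
  rewrite -(card_in_imset inj); apply: subset_leq_card.
  apply/subsetP=> _ /imsetP[E hE ->].
  move: hE; rewrite inE => /andP[hE hI].
  rewrite inE EcalB //=; apply/eqP.
  apply: (key_comm hI0 hS0 (EcalB hE hE0)) => //.
  rewrite /U0 imgm_comp.
  have -> : (1%:M + E0) *m (1%:M + (E - E0)) = 1%:M + E.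
    rewrite mulmxDl mul1mx mulmxDr mulmx1 (Ecal_mul hE0 (EcalB hE hE0)) addr0.
    by rewrite -addrA subrK.
  by [].
have hwx j : w *m x j \in Ecal.
  apply: EcalI => [v|y hy]; first by rewrite mulmx_cw gsubZ.
  by rewrite mulmxA hw1 // mul0mx.
pose mu : F := (T u0 *m w) 0 0.
pose g (M : 'M[F]_n) := T (u0 *m M) - T u0 *m M.
have hg D j : D \in K -> g (D + w *m x j) = T (x j) - mu *: x j.
  rewrite inE => /andP[_ /eqP hD]; rewrite /g !mulmxDr TD hD.
  rewrite [u0 *m (w *m _)]mulmxA hw2 mul1mx mulmx_cw -/mu.
  by rewrite opprD addrACA subrr add0r.
have h2 : (#|K| * #|J| <= #|Ecal|)%N.
  pose f (DJ : 'M[F]_n * J) := DJ.1 + w *m x DJ.2.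
  have inj : {in setX K [set: J] &, injective f}.
    move=> [D j] [D' j'] /setXP[hD _] /setXP[hD' _] /= he.
    have hj : j = j'.
      apply: (@hxinj mu); rewrite /= -(hg D j) // -(hg D' j') //.
      by rewrite /f /= in he; rewrite he.
    by subst j'; rewrite /f /= in he; move/addIr: he => ->.
  rewrite -cardsT -cardsX -(card_in_imset inj); apply: subset_leq_card.
  apply/subsetP=> _ /imsetP[[D j] /setXP[hD _] ->].
  by rewrite /f /= EcalD //; move: hD; rewrite inE => /andP[].
rewrite mulnC; apply: leq_trans h2; rewrite leq_mul2r h1 orbT //.
Qed.

Lemma card_sep (T' : finType) (A : {set T'}) (Pr : pred T') :
  #|[set y in A | Pr y]| = (\sum_(y in A) Pr y)%N.
Proof.
rewrite -sum1_card big_mkcond [RHS]big_mkcond /=; apply: eq_bigr=> y _.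
by rewrite inE; case: (y \in A); case: (Pr y).
Qed.

Theorem dc_bound : (#|J| * #|Inv :&: S0| <= #|S0|)%N.
Proof.
have hE : (0 < #|Ecal|)%N by apply/card_gt0P; exists 0; apply: Ecal0.
rewrite -(leq_pmul2r hE).
have step1 E : E \in Ecal -> (#|Inv :&: S0| <= #|[set U in S0 | imgm (1%:M + E) U \in Inv]|)%N.
  move=> hEE.
  have inj : {in Inv :&: S0 &, injective (imgm (1%:M + - E))}.
    by move=> ? ? _ _; apply: imgm_inj; apply: Ecal_unit; apply: EcalN.
  rewrite -(card_in_imset inj); apply: subset_leq_card.
  apply/subsetP=> _ /imsetP[W hW ->]; move: hW; rewrite inE => /andP[hWI hWS].
  rewrite inE S0_img ?EcalN //= imgm_comp.
  have -> : (1%:M + - E) *m (1%:M + E) = 1%:M.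
    by rewrite mulmxDl mul1mx mulNmx mulmxDr mulmx1 (Ecal_mul hEE hEE) addr0 addrK.
  by rewrite imgm1.
have e1 : (#|Inv :&: S0| * #|Ecal| <=
   \sum_(E in Ecal) #|[set U in S0 | imgm (1%:M + E) U \in Inv]|)%N.
  by rewrite mulnC -sum_nat_const; apply: leq_sum => E hEE; apply: step1.
have e2 : (\sum_(E in Ecal) #|[set U in S0 | imgm (1%:M + E) U \in Inv]| =
   \sum_(U in S0) #|[set E in Ecal | imgm (1%:M + E) U \in Inv]|)%N.
  under eq_bigr do rewrite card_sep.
  rewrite exchange_big /=; apply: eq_bigr => U _; by rewrite card_sep.
rewrite -mulnA; apply: leq_trans (leq_mul (leqnn #|J|) e1) _.
rewrite e2 big_distrr /= -sum_nat_const; apply: leq_sum => U hU.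
exact: per_U.
Qed.

End DC.


Section Gen2.
Variables (F : finFieldType) (n : nat).
Local Notation V := 'rV[F]_n.
Variable P : {set V}.
Hypothesis hP : gsub P.

Definition Full : {set {set V}} := [set U | gsub U && (P \subset U)].
Definition Cls (X : {set V}) : {set {set V}} := [set U | gsub U && (U :&: P == X)].
Definition Mid : {set {set V}} :=
  [set U | [&& gsub U, U :&: P != [set 0] & ~~ (P \subset U)]].

Lemma full_le (th : 'cV[F]_n) (a : V) : a \in P -> a *m th = 1%:M ->
  (#|Full| <= #|Cls [set y in P | y *m th == 0%R]|)%N.
Proof.
move=> haP hath.
pose f (U : {set V}) := [set u in U | u *m th == 0].
have inj : {in Full &, injective f}.
  move=> U1 U2; rewrite !inE => /andP[hU1 hPU1] /andP[hU2 hPU2] he.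
  have sub (U U' : {set V}) : gsub U -> gsub U' -> P \subset U -> P \subset U' ->
      f U = f U' -> U \subset U'.
    move=> hU hU' hPU hPU' e; apply/subsetP=> u hu.
    have h1 : u - (u *m th) 0 0 *: a \in f U.
      rewrite inE; apply/andP; split; first by apply: gsubB => //; apply: gsubZ => //; apply: (subsetP hPU).
      rewrite mulmxBl -scalemxAl hath.
      by rewrite {1}[u *m th]mx11_scalar -scalemx1 subrr.
    move: h1; rewrite e inE => /andP[h2 _].
    have e2 : u = (u - (u *m th) 0 0 *: a) + (u *m th) 0 0 *: a by rewrite subrK.
    rewrite e2; apply: gsubD => //; apply: gsubZ => //; exact: (subsetP hPU').
  by apply/eqP; rewrite eqEsubset (sub U1 U2) ?(sub U2 U1).
rewrite -(card_in_imset inj); apply: subset_leq_card; apply/subsetP=> _ /imsetP[U hU ->].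
move: hU; rewrite inE => /andP[hU hPU].
rewrite inE; apply/andP; split.
  apply: gsubI; split.
  - by rewrite inE gsub0 // mul0mx eqxx.
  - move=> x y; rewrite !inE => /andP[hx /eqP hx0] /andP[hy /eqP hy0].
    by rewrite gsubD // mulmxDl hx0 hy0 addr0 eqxx.
  - move=> c x; rewrite !inE => /andP[hx /eqP hx0].
    by rewrite gsubZ // -scalemxAl hx0 scaler0 eqxx.
apply/eqP/setP=> y; rewrite !inE.
by case hy : (y \in P); rewrite ?andbF ?andbT // (subsetP hPU) //= andbC.
Qed.

Definition line (z : V) : {set V} := [set t *: z | t : F].

Lemma gsub_line z : gsub (line z).
Proof.
apply: gsubI; split.
- by apply/imsetP; exists 0; rewrite ?scale0r.
- by move=> _ _ /imsetP[s _ ->] /imsetP[t _ ->]; apply/imsetP; exists (s + t); rewrite ?scalerDl.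
- by move=> c _ /imsetP[s _ ->]; apply/imsetP; exists (c * s); rewrite ?scalerA.
Qed.

Lemma S0_lb (J : finType) (x : J -> V) (v : V) : v \notin P ->
  (forall j, x j \in P) -> injective x -> (#|J| <= #|S0 P|)%N.
Proof.
move=> hv hxP hxi.
pose f j := line (v + x j).
have hvx j t : t *: (v + x j) \in P -> t = 0.
  move=> h; case: (eqVneq t 0) => // ht; exfalso; move/negP: hv; apply.
  have : t^-1 *: (t *: (v + x j)) - x j \in P by apply: gsubB => //; apply: gsubZ.
  by rewrite scalerA mulVf // scale1r addrK.
have inj : injective f.
  move=> j j' he.
  have : v + x j \in f j' by rewrite -he; apply/imsetP; exists 1; rewrite ?scale1r.
  case/imsetP=> t _ ht.
  have ht1 : t = 1.
    apply/eqP; rewrite -subr_eq0; apply/eqP; apply: (hvx j').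
    rewrite scalerBl scale1r -ht opprD addrACA subrr add0r.
    by apply: gsubB.
  by move: ht; rewrite ht1 scale1r => /addrI /hxi.
rewrite -(card_imset _ inj); apply: subset_leq_card; apply/subsetP=> _ /imsetP[j _ ->].
apply: (S0I hP); first exact: gsub_line.
  by move=> _ /imsetP[t _ ->] /hvx ->; rewrite scale0r.
exists (v + x j); first by apply/imsetP; exists 1; rewrite ?scale1r.
apply: contraNneq hv => h; have -> : v = - x j by rewrite -(addrK (x j) v) h sub0r.
by rewrite gsubN.
Qed.

Definition gm (w : 'cV[F]_n) (z : V) : 'M[F]_n := 1%:M + w *m z.

Lemma gm_inv w z : z *m w = 0 -> gm w z *m gm (- w) z = 1%:M.
Proof.
move=> hzw; rewrite /gm mulmxDl mul1mx mulmxDr mulmx1 mulNmx mulmxN.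
have h0 : w *m z *m (w *m z) = 0 by rewrite mulmxA -(mulmxA w) hzw mulmx0 mul0mx.
by rewrite h0 oppr0 addr0 subrK.
Qed.

Lemma gm_free w z : z *m w = 0 -> row_free (gm w z).
Proof. by move=> h; rewrite row_free_unit; case: (mulmx1_unit (gm_inv h)). Qed.

Lemma gm_P w z y : z \in P -> y \in P -> y *m gm w z \in P.
Proof. by move=> hz hy; rewrite /gm mulmxDr mulmx1 mulmx_cw gsubD ?gsubZ. Qed.

Lemma gm_capP w z (U : {set V}) : z \in P -> z *m w = 0 ->
  imgm (gm w z) U :&: P = imgm (gm w z) (U :&: P).
Proof.
move=> hz hzw; apply/setP=> y; rewrite inE; apply/andP/imsetP.
  case=> /imsetP[u hu ->] hP'; exists u => //; rewrite inE hu /=.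
  have : u *m gm w z *m gm (- w) z \in P by apply: gm_P.
  by rewrite -mulmxA gm_inv // mulmx1.
case=> u; rewrite inE => /andP[hu huP] ->; split; first exact: mem_imgm.
exact: gm_P.
Qed.

Section Fam.
Variables (J : finType) (w : J -> 'cV[F]_n) (z : J -> V) (X : {set V}).
Hypotheses (hzP : forall j, z j \in P) (hzw : forall j, z j *m w j = 0).
Hypothesis hinj : injective (fun j => imgm (gm (w j) (z j)) X).

Definition famImg : {set {set V}} :=
  [set imgm (gm (w jU.1) (z jU.1)) jU.2 | jU in setX [set: J] (Cls X)].

Lemma famImg_card : #|famImg| = (#|J| * #|Cls X|)%N.
Proof.
rewrite -cardsT -cardsX; apply: card_in_imset.
move=> [j U] [j' U'] /setXP[_ hU] /setXP[_ hU'] /= he.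
move: hU hU'; rewrite !inE => /andP[hU /eqP hUX] /andP[hU' /eqP hUX'].
have hj : j = j'.
  apply: hinj => /=.
  have e1 : imgm (gm (w j) (z j)) X = imgm (gm (w j) (z j)) U :&: P by rewrite gm_capP // hUX.
  have e2 : imgm (gm (w j') (z j')) X = imgm (gm (w j') (z j')) U' :&: P by rewrite gm_capP // hUX'.
  by rewrite e1 e2 he.
subst j'; congr (_, _); exact: (imgm_inj (gm_free (hzw j)) he).
Qed.

Lemma famImgP W : W \in famImg ->
  gsub W /\ exists j, W :&: P = imgm (gm (w j) (z j)) X.
Proof.
case/imsetP=> [[j U]] /setXP[_]; rewrite inE => /andP[hU /eqP hUX] -> /=.
split; first exact: gsub_img.
by exists j; rewrite gm_capP // hUX.
Qed.
End Fam.

Lemma Mid_of W : gsub W -> W :&: P != [set 0] -> ~~ (P \subset W :&: P) -> W \in Mid.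
Proof.
move=> hW h1 h2; rewrite inE hW h1 /=; apply: contra h2 => h.
by rewrite subsetI h subxx.
Qed.

End Gen2.


Section Sep.
Variables (F : finFieldType) (n : nat).
Local Notation V := 'rV[F]_n.

Lemma colM1 (M : V) (j : 'I_n) : M 0 j != 0 ->
  M *m ((M 0 j)^-1 *: delta_mx j 0) = 1%:M.
Proof.
move=> hj; rewrite -scalemxAr -colE.
have -> : col j M = (M 0 j)%:M by apply/matrixP=> a b; rewrite !ord1 !mxE /= mulr1n.
by rewrite scale_scalar_mx mulVf.
Qed.

Lemma sepw m (B : 'M[F]_(m, n)) (v : V) : ~~ (v <= B)%MS ->
  exists w : 'cV[F]_n, B *m w = 0 /\ v *m w = 1%:M.
Proof.
rewrite submxE => hv.
have [j hj] : exists j, (v *m cokermx B) 0 j != 0.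
  case/boolP: [exists j, (v *m cokermx B) 0 j != 0] => [/existsP //|/existsPn h].
  case/negP: hv; apply/eqP; apply/matrixP=> i j; rewrite ord1 [RHS]mxE.
  by move: (h j); rewrite negbK => /eqP.
exists (cokermx B *m (((v *m cokermx B) 0 j)^-1 *: delta_mx j 0)).
split; first by rewrite mulmxA mulmx_coker mul0mx.
by rewrite mulmxA colM1.
Qed.

Lemma mx11_mul (c : 'M[F]_1) (z : V) : c *m z = c 0 0 *: z.
Proof. by rewrite {1}[c]mx11_scalar mul_scalar_mx. Qed.

Lemma in_span1 (z v : V) : (v <= z)%MS -> exists t : F, v = t *: z.
Proof. by case/submxP=> D ->; exists (D 0 0); rewrite mx11_mul. Qed.

Lemma in_span2 (a b v : V) : (v <= col_mx a b)%MS -> exists s t : F, v = s *: a + t *: b.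
Proof.
case/submxP=> D ->; rewrite -[D]hsubmxK mul_row_col !mx11_mul.
by exists (lsubmx D 0 0), (rsubmx D 0 0).
Qed.

Lemma in_span3 (a b c v : V) : (v <= col_mx (col_mx a b) c)%MS ->
  exists s t r : F, v = s *: a + t *: b + r *: c.
Proof.
case/submxP=> D ->; rewrite -[D]hsubmxK mul_row_col.
rewrite -[lsubmx D]hsubmxK mul_row_col !mx11_mul.
by exists (lsubmx (lsubmx D) 0 0), (rsubmx (lsubmx D) 0 0), (rsubmx D 0 0).
Qed.

Lemma col2_w (a b : V) (w : 'cV[F]_n) : col_mx a b *m w = 0 -> a *m w = 0 /\ b *m w = 0.
Proof. by rewrite mul_col_mx -col_mx0 => /eq_col_mx. Qed.

Lemma col3_w (a b c : V) (w : 'cV[F]_n) : col_mx (col_mx a b) c *m w = 0 ->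
  [/\ a *m w = 0, b *m w = 0 & c *m w = 0].
Proof.
rewrite mul_col_mx -col_mx0 => /eq_col_mx[/col2_w[h1 h2] h3]; by split.
Qed.

Lemma scal11 (v : V) (w : 'cV[F]_n) (t : F) : (t *: v) *m w = (t * (v *m w) 0 0)%:M.
Proof. by rewrite -scalemxAl {1}[v *m w]mx11_scalar -scale_scalar_mx. Qed.

End Sep.


Lemma cardU_disj (T : finType) (A B : {set T}) : [disjoint A & B] ->
  #|A :|: B| = (#|A| + #|B|)%N.
Proof. by move=> h; rewrite cardsU (disjoint_setI0 h) cards0 subn0. Qed.

Lemma disjointI (T : finType) (A B : {set T}) :
  (forall x, x \in A -> x \in B -> False) -> [disjoint A & B].
Proof.
move=> H; rewrite -setI_eq0; apply/eqP/setP=> x; rewrite in_setI in_set0.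
by apply/negP=> /andP[h1 h2]; exact: (H x h1 h2).
Qed.

Lemma cardU_le (T : finType) (A B : {set T}) : (#|A :|: B| <= #|A| + #|B|)%N.
Proof. by rewrite cardsU leq_subr. Qed.

Lemma card_F_gt1 (F : finFieldType) : (1 < #|F|)%N.
Proof. by apply/card_gt1P; exists 0, 1; rewrite !inE eq_sym oner_neq0. Qed.

Section K2.
Variables (F : finFieldType) (n : nat).
Local Notation V := 'rV[F]_n.
Variable T : V -> V.
Hypothesis hT : forall (a : F) x y, T (a *: x + y) = a *: T x + T y.
Variables a b : V.
Hypotheses (hTa : T a = b) (hTb : T b = 0).
Hypothesis hind : forall s t : F, s *: a + t *: b = 0 -> s = 0 /\ t = 0.

Lemma coef2 s t s' t' : s *: a + t *: b = s' *: a + t' *: b -> s = s' /\ t = t'.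
Proof.
move=> h; have [h1 h2] : s - s' = 0 /\ t - t' = 0.
  by apply: hind; rewrite !scalerBl addrACA -opprD h subrr.
by split; apply/eqP; rewrite -subr_eq0; apply/eqP.
Qed.

Lemma a_neq0 : a != 0.
Proof. by apply/eqP=> h; have := hind (s:=1) (t:=0); rewrite h scaler0 scale0r addr0 => /(_ erefl) [/eqP]; rewrite oner_eq0. Qed.
Lemma b_neq0 : b != 0.
Proof. by apply/eqP=> h; have := hind (s:=0) (t:=1); rewrite h scaler0 scale0r addr0 => /(_ erefl) [_ /eqP]; rewrite oner_eq0. Qed.

Definition P2 : {set V} := [set y | [exists s : F, exists t : F, y == s *: a + t *: b]].

Lemma P2P y : reflect (exists s t, y = s *: a + t *: b) (y \in P2).
Proof.
rewrite inE; apply: (iffP existsP) => [[s /existsP[t /eqP ->]]|[s [t ->]]].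
  by exists s, t.
by exists s; apply/existsP; exists t.
Qed.

Lemma P2_in s t : s *: a + t *: b \in P2.
Proof. by apply/P2P; exists s, t. Qed.

Lemma gsubP2 : gsub P2.
Proof.
apply: gsubI; split.
- by apply/P2P; exists 0, 0; rewrite !scale0r addr0.
- move=> _ _ /P2P[s [t ->]] /P2P[s' [t' ->]]; apply/P2P; exists (s + s'), (t + t').
  by rewrite !scalerDl addrACA.
- move=> c _ /P2P[s [t ->]]; apply/P2P; exists (c * s), (c * t).
  by rewrite scalerDr !scalerA.
Qed.

Lemma TP2 y : y \in P2 -> T y \in P2.
Proof.
case/P2P=> s [t ->]; rewrite hT (TZ hT) hTa hTb scaler0 addr0.
by apply/P2P; exists 0, s; rewrite scale0r add0r.
Qed.

Lemma sepP2 v : v \notin P2 ->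
  exists w : 'cV[F]_n, (forall y, y \in P2 -> y *m w = 0) /\ v *m w = 1%:M.
Proof.
move=> hv; have : ~~ (v <= col_mx a b)%MS.
  by apply: contra hv => /in_span2[s [t ->]]; apply: P2_in.
case/sepw=> w [/col2_w[ha hb] hw]; exists w; split=> // _ /P2P[s [t ->]].
by rewrite mulmxDl -!scalemxAl ha hb !scaler0 addr0.
Qed.

Definition Lb : {set V} := line b.

Lemma classify2 U : U \in Inv T -> U :&: P2 != [set 0] -> ~~ (P2 \subset U) ->
  U :&: P2 = Lb.
Proof.
move=> hI hne hnP; have [hU hTU] := InvP hI.
have noa s t : s *: a + t *: b \in U -> s = 0.
  move=> hy; apply: contraNeq hnP => hs.
  have hbU : b \in U.
    have := hTU _ hy; rewrite hT (TZ hT) hTa hTb scaler0 addr0 => hsb.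
    by have := gsubZ (s^-1) hU hsb; rewrite scalerA mulVf // scale1r.
  have haU : a \in U.
    have h1 : s *: a \in U by rewrite -(addrK (t *: b) (s *: a)); apply: gsubB => //; apply: gsubZ.
    by have := gsubZ (s^-1) hU h1; rewrite scalerA mulVf // scale1r.
  apply/subsetP=> _ /P2P[s' [t' ->]]; apply: gsubD => //; exact: gsubZ.
have hbU : b \in U.
  have [y hy hy0] : exists2 y, y \in U :&: P2 & y != 0.
    case: (pickP [pred y | (y \in U :&: P2) && (y != 0)]) => [y /andP[h1 h2]|hnone].
      by exists y.
    case/negP: hne; apply/eqP/setP=> y; apply/idP/idP => hy.
      by have := hnone y; rewrite /= hy /= => /negbFE/eqP ->; rewrite inE.
    by move: hy; rewrite inE => /eqP ->; rewrite inE !gsub0 // gsubP2.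
  move: hy; rewrite inE => /andP[hyU /P2P[s [t hst]]].
  move: hyU hy0; rewrite hst => hyU hy0.
  have s0 := noa _ _ hyU; move: hyU hy0; rewrite s0 scale0r add0r => hyU hy0.
  have ht : t != 0 by apply: contraNneq hy0 => ->; rewrite scale0r.
  by have := gsubZ (t^-1) hU hyU; rewrite scalerA mulVf // scale1r.
apply/setP=> y; rewrite inE; apply/andP/imsetP.
  case=> hyU /P2P[s [t hst]]; move: hyU; rewrite hst => hyU.
  by rewrite (noa _ _ hyU) scale0r add0r; exists t.
case=> t _ ->; split; first exact: gsubZ.
by apply/P2P; exists 0, t; rewrite scale0r add0r.
Qed.


Lemma scal00 (M : 'M[F]_1) (c : F) : (c *: M) 0 0 = c * M 0 0.
Proof. by rewrite mxE. Qed.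

Lemma gval (y : V) (w : 'cV[F]_n) (z : V) : y *m gm w z = y + (y *m w) 0 0 *: z.
Proof. by rewrite /gm mulmxDr mulmx1 mulmx_cw. Qed.

Lemma not_a_b : ~~ (a <= b)%MS.
Proof.
apply/negP=> /in_span1[t ht].
have := @coef2 1 0 0 t; rewrite scale1r !scale0r addr0 add0r => /(_ ht) [/eqP].
by rewrite oner_eq0.
Qed.

Lemma not_b_a : ~~ (b <= a)%MS.
Proof.
apply/negP=> /in_span1[t ht].
have := @coef2 0 1 t 0; rewrite scale1r !scale0r addr0 add0r => /(_ ht) [_ /eqP].
by rewrite oner_eq0.
Qed.

Lemma full2 : (#|Full P2| <= #|Cls P2 Lb|)%N.
Proof.
have [th [hbth hath]] := sepw not_a_b.
have -> : Lb = [set y in P2 | y *m th == 0%R].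
  apply/setP=> y; rewrite [in RHS]inE; apply/imsetP/andP.
    case=> t _ ->; split; first by apply/P2P; exists 0, t; rewrite scale0r add0r.
    by rewrite -scalemxAl hbth scaler0.
  case=> /P2P[s [t ->]]; rewrite mulmxDl -!scalemxAl hath hbth scaler0 addr0.
  rewrite scalemx1 => /eqP/matrixP/(_ 0 0); rewrite !mxE /= mulr1n => ->; exists t => //.
  by rewrite scale0r add0r.
by apply: (full_le (a:=a)) => //; apply/P2P; exists 1, 0; rewrite scale1r scale0r addr0.
Qed.

Lemma mid2 : (#|F| * #|Cls P2 Lb| <= #|Mid P2|)%N.
Proof.
have [wb [hawb hbwb]] := sepw not_b_a.
have hb s : b *m gm (s *: wb) a = s *: a + 1 *: b.
  by rewrite gval -scalemxAr scal00 hbwb mxE mulr1 scale1r addrC.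
have htb s t : (t *: b) *m gm (s *: wb) a = (t * s) *: a + t *: b.
  by rewrite gval -scalemxAl -scalemxAr !scal00 hbwb mxE mulr1 addrC.
have hzP (s : F) : a \in P2 by apply/P2P; exists 1, 0; rewrite scale1r scale0r addr0.
have hzw (s : F) : a *m (s *: wb) = 0 by rewrite -scalemxAr hawb scaler0.
have hinj : injective (fun s : F => imgm (gm (s *: wb) a) Lb).
  move=> s s' /= he.
  have : b *m gm (s *: wb) a \in imgm (gm (s' *: wb) a) Lb.
    by rewrite -he; apply: mem_imgm; apply/imsetP; exists 1; rewrite ?scale1r.
  case/imsetP=> _ /imsetP[t _ ->]; rewrite hb htb => /coef2[h1 h2].
  by rewrite h1 -h2 mul1r.
rewrite -(famImg_card gsubP2 hzP hzw hinj); apply: subset_leq_card.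
apply/subsetP=> W /(famImgP gsubP2 hzP hzw)[hW [s hWs]].
apply: Mid_of => //; rewrite hWs.
  apply/eqP=> h0.
  have : b *m gm (s *: wb) a \in [set 0 : V] by rewrite -h0; apply: mem_imgm; apply/imsetP; exists 1; rewrite ?scale1r.
  rewrite inE hb => /eqP; rewrite -(addr0 0) -{1}(scale0r a) -(scale0r b) => /coef2[_ /eqP].
  by rewrite oner_eq0.
apply/negP=> /subsetP /(_ a) h.
have : a \in imgm (gm (s *: wb) a) Lb by apply: h; apply/P2P; exists 1, 0; rewrite scale1r scale0r addr0.
case/imsetP=> _ /imsetP[t _ ->]; rewrite htb.
rewrite -{1}(scale1r a) -{1}(addr0 (1 *: a)) -(scale0r b) => /coef2[h1 h2].
by move: h1; rewrite -h2 mul0r => /eqP; rewrite oner_eq0.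
Qed.

Lemma notP2 : (3 <= n)%N -> exists v, v \notin P2.
Proof.
move=> hn; case: (pickP [pred v | v \notin P2]) => [v hv|hnone]; first by exists v.
exfalso.
have h1 : ([set: V] \subset P2) by apply/subsetP=> v _; have := hnone v; rewrite /= => /negbFE.
have h2 : (#|P2| <= #|F| * #|F|)%N.
  pose f (st : F * F) := st.1 *: a + st.2 *: b.
  rewrite -card_prod -cardsT; apply: leq_trans (leq_imset_card f _).
  by apply: subset_leq_card; apply/subsetP=> _ /P2P[s [t ->]]; apply/imsetP; exists (s, t).
have := leq_trans (subset_leq_card h1) h2; rewrite cardsT card_mx mul1n mulnn.
have hF := card_F_gt1 F.
by rewrite leq_exp2l // => h3; move: (leq_trans hn h3).
Qed.

Theorem bound2 : (3 <= n)%N ->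
  (#|F| * #|Inv T| <= 2 * #|[set U : {set V} | gsub U]|)%N.
Proof.
move=> hn.
have hxP (s : F) : s *: a \in P2 by apply/P2P; exists s, 0; rewrite scale0r addr0.
have hxinj (mu : F) : injective (fun s : F => T (s *: a) - mu *: (s *: a)).
  move=> s s' /=; rewrite !(TZ hT) hTa.
  have e (r : F) : r *: b - mu *: (r *: a) = (- (mu * r)) *: a + r *: b.
    by rewrite scalerA scaleNr addrC.
  by rewrite !e => /coef2[_].
have dc := dc_bound hT gsubP2 TP2 sepP2 hxP hxinj.
have [v hv] := notP2 hn.
have hs0 : (#|F| <= #|S0 P2|)%N.
  apply: (S0_lb gsubP2 hv hxP) => s s' /= /eqP.
  rewrite -subr_eq0 -scalerBl scaler_eq0 (negbTE a_neq0) orbF subr_eq0 => /eqP //.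
have hfull := full2.
have hmid := mid2.
set S := [set U : {set V} | gsub U].
have hInv : (#|Inv T| <= 1 + #|Inv T :&: S0 P2| + #|Cls P2 Lb| + #|Full P2|)%N.
  have hsub : Inv T \subset [set [set 0 : V]] :|: (Inv T :&: S0 P2) :|: Cls P2 Lb :|: Full P2.
    apply/subsetP=> U hU; have [hUs _] := InvP hU.
    rewrite !in_setU.
    case: (boolP (U :&: P2 == [set 0])) => hUP.
      case: (boolP (U == [set 0])) => hU0.
        by rewrite (eqP hU0) in_set1 eqxx.
      by rewrite in_setI hU [U \in S0 _]inE hUs hUP hU0 /= orbT.
    case: (boolP (P2 \subset U)) => hPU; first by rewrite [U \in Full _]inE hUs hPU !orbT.
    by rewrite [U \in Cls _ _]inE (classify2 hU hUP hPU) eqxx hUs !orbT.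
  apply: leq_trans (subset_leq_card hsub) _.
  apply: leq_trans (cardU_le _ _) _; rewrite leq_add2r.
  apply: leq_trans (cardU_le _ _) _; rewrite leq_add2r.
  by apply: leq_trans (cardU_le _ _) _; rewrite cards1.
have hS : (1 + #|S0 P2| + #|Mid P2| + #|Full P2| <= #|S|)%N.
  have z0 : [set 0 : V] :&: P2 = [set 0].
    apply/setP=> y; rewrite in_setI in_set1; case: eqP => // ->.
    by rewrite gsub0 // gsubP2.
  have haP : a \in P2 by apply/P2P; exists 1, 0; rewrite scale1r scale0r addr0.
  have d1 : [disjoint [set [set 0 : V]] & S0 P2].
    by rewrite disjoints1 [_ \in S0 _]inE eqxx !andbF.
  have d2 : [disjoint [set [set 0 : V]] :|: S0 P2 & Mid P2].
    apply: disjointI => U; rewrite in_setU in_set1 [U \in S0 _]inE [U \in Mid _]inE.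
    move=> /orP[/eqP->|/and3P[_ /eqP-> _]] /and3P[_ h _].
      by move: h; rewrite z0 eqxx.
    by rewrite eqxx in h.
  have d3 : [disjoint [set [set 0 : V]] :|: S0 P2 :|: Mid P2 & Full P2].
    apply: disjointI => U; rewrite !in_setU in_set1 [U \in S0 _]inE [U \in Mid _]inE.
    rewrite [U \in Full _]inE => + /andP[_ hPU].
    move=> /orP[/orP[/eqP hU|/and3P[_ /eqP h _]]|/and3P[_ _ h]].
    - have : a \in U by apply: (subsetP hPU).
      by rewrite hU in_set1 (negbTE a_neq0).
    - have : a \in U :&: P2 by rewrite in_setI (subsetP hPU).
      by rewrite h in_set1 (negbTE a_neq0).
    - by rewrite hPU in h.
  have hc : #|[set [set 0 : V]] :|: S0 P2 :|: Mid P2 :|: Full P2| =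
     (1 + #|S0 P2| + #|Mid P2| + #|Full P2|)%N.
    by rewrite (cardU_disj d3) (cardU_disj d2) (cardU_disj d1) cards1.
  rewrite -hc.
  apply: subset_leq_card; apply/subsetP=> U; rewrite !in_setU in_set1 [U \in S0 _]inE.
  rewrite [U \in Mid _]inE [U \in Full _]inE [U \in S]inE.
  move=> /orP[/orP[/orP[/eqP->|/and3P[->//]]|/and3P[->//]]|/andP[->//]].
  exact: gsub_set0.
have h1 := leq_mul (leqnn #|F|) hInv.
have h2 := leq_mul (leqnn #|F|) hfull.
rewrite !mulnDr muln1 in h1.
move: hInv hS h1 h2 hmid hs0 dc hfull; clear; move: #|F| => q; move: #|Inv T| => i; move: #|Inv T :&: S0 P2| => i0; move: #|Cls P2 Lb| => c; move: #|Full P2| => f; move: #|S0 P2| => s0; move: #|Mid P2| => m; move: #|S| => s. nia.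
Qed.
End K2.


Section K3.
Variables (F : finFieldType) (n : nat).
Local Notation V := 'rV[F]_n.
Variable T : V -> V.
Hypothesis hT : forall (a : F) x y, T (a *: x + y) = a *: T x + T y.
Variables a b c : V.
Hypotheses (hTa : T a = b) (hTb : T b = c) (hTc : T c = 0).
Hypothesis hind : forall s t r : F, s *: a + t *: b + r *: c = 0 -> [/\ s = 0, t = 0 & r = 0].

Definition comb (s t r : F) : V := s *: a + t *: b + r *: c.

Lemma combD s t r s' t' r' : comb s t r + comb s' t' r' = comb (s + s') (t + t') (r + r').
Proof.
rewrite /comb !scalerDl; set x1 := s *: a; set x2 := t *: b; set x3 := r *: c.
set y1 := s' *: a; set y2 := t' *: b; set y3 := r' *: c.
by rewrite addrACA (addrACA x1).
Qed.

Lemma combZ k s t r : k *: comb s t r = comb (k * s) (k * t) (k * r).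
Proof. by rewrite /comb !scalerDr !scalerA. Qed.

Lemma combN s t r : - comb s t r = comb (- s) (- t) (- r).
Proof. by rewrite -scaleN1r combZ !mulN1r. Qed.

Lemma combB s t r s' t' r' : comb s t r - comb s' t' r' = comb (s - s') (t - t') (r - r').
Proof. by rewrite combN combD. Qed.

Lemma comb_inj s t r s' t' r' : comb s t r = comb s' t' r' -> [/\ s = s', t = t' & r = r'].
Proof.
move=> h; have /hind[h1 h2 h3] : comb (s - s') (t - t') (r - r') = 0 by rewrite -combB h subrr.
by split; apply/eqP; rewrite -subr_eq0; apply/eqP.
Qed.

Lemma combT s t r : T (comb s t r) = comb 0 s t.
Proof.
rewrite /comb !(TD hT) !(TZ hT) hTa hTb hTc scaler0 addr0 scale0r add0r.
by [].
Qed.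

Lemma comb_a : a = comb 1 0 0. Proof. by rewrite /comb scale1r !scale0r !addr0. Qed.
Lemma comb_b : b = comb 0 1 0. Proof. by rewrite /comb scale1r !scale0r addr0 add0r. Qed.
Lemma comb_c : c = comb 0 0 1. Proof. by rewrite /comb scale1r !scale0r !add0r. Qed.
Lemma comb_0 : 0 = comb 0 0 0 :> V. Proof. by rewrite /comb !scale0r !addr0. Qed.

Lemma combW (w : 'cV[F]_n) s t r :
  (comb s t r *m w) 0 0 = s * (a *m w) 0 0 + t * (b *m w) 0 0 + r * (c *m w) 0 0.
Proof. by rewrite /comb !mulmxDl -!scalemxAl !mxE. Qed.

Lemma one_neq0 : (1 : F) != 0. Proof. exact: oner_neq0. Qed.

Lemma a3_neq0 : a != 0.
Proof.
apply/eqP=> h; have e : comb 1 0 0 = comb 0 0 0 by rewrite -comb_a -comb_0.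
by have [/eqP] := comb_inj e; rewrite oner_eq0.
Qed.

Definition P3 : {set V} := [set y | [exists s : F, exists t : F, exists r : F, y == comb s t r]].

Lemma P3P y : reflect (exists s t r, y = comb s t r) (y \in P3).
Proof.
rewrite inE; apply: (iffP existsP) => [[s /existsP[t /existsP[r /eqP ->]]]|[s [t [r ->]]]].
  by exists s, t, r.
by exists s; apply/existsP; exists t; apply/existsP; exists r.
Qed.

Lemma P3_in s t r : comb s t r \in P3.
Proof. by apply/P3P; exists s, t, r. Qed.

Lemma gsubP3 : gsub P3.
Proof.
apply: gsubI; split.
- by rewrite comb_0 P3_in.
- by move=> _ _ /P3P[s [t [r ->]]] /P3P[s' [t' [r' ->]]]; rewrite combD P3_in.
- by move=> k _ /P3P[s [t [r ->]]]; rewrite combZ P3_in.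
Qed.

Lemma TP3 y : y \in P3 -> T y \in P3.
Proof. by case/P3P=> s [t [r ->]]; rewrite combT P3_in. Qed.

Lemma sepP3 v : v \notin P3 ->
  exists w : 'cV[F]_n, (forall y, y \in P3 -> y *m w = 0) /\ v *m w = 1%:M.
Proof.
move=> hv; have : ~~ (v <= col_mx (col_mx a b) c)%MS.
  by apply: contra hv => /in_span3[s [t [r ->]]]; apply: P3_in.
case/sepw=> w [/col3_w[ha hb hc] hw]; exists w; split=> // _ /P3P[s [t [r ->]]].
by rewrite /comb !mulmxDl -!scalemxAl ha hb hc !scaler0 !addr0.
Qed.

Definition Lc : {set V} := [set y | [exists r : F, y == comb 0 0 r]].
Definition Pbc : {set V} := [set y | [exists t : F, exists r : F, y == comb 0 t r]].

Lemma LcP y : reflect (exists r, y = comb 0 0 r) (y \in Lc).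
Proof.
rewrite inE; apply: (iffP existsP) => [[r /eqP ->]|[r ->]]; first by exists r.
by exists r.
Qed.

Lemma PbcP y : reflect (exists t r, y = comb 0 t r) (y \in Pbc).
Proof.
rewrite inE; apply: (iffP existsP) => [[t /existsP[r /eqP ->]]|[t [r ->]]].
  by exists t, r.
by exists t; apply/existsP; exists r.
Qed.

Lemma classify3 U : U \in Inv T -> U :&: P3 != [set 0] -> ~~ (P3 \subset U) ->
  U :&: P3 = Lc \/ U :&: P3 = Pbc.
Proof.
move=> hI hne hnP; have [hU hTU] := InvP hI.
have scaleU k y : k != 0 -> k *: y \in U -> y \in U.
  by move=> hk h; have := gsubZ (k^-1) hU h; rewrite scalerA mulVf // scale1r.
have noa s t r : comb s t r \in U -> s = 0.
  move=> hy; apply: contraNeq hnP => hs.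
  have hTy := hTU _ hy; have hTTy := hTU _ hTy.
  rewrite !combT in hTy hTTy.
  have hcU : c \in U.
    by apply: (scaleU s) => //; rewrite comb_c combZ mulr0 mulr1.
  have hbU : b \in U.
    apply: (scaleU s) => //.
    have -> : s *: b = comb 0 s t - t *: c.
      by rewrite comb_b comb_c !combZ combB; congr comb; ring.
    by apply: gsubB => //; apply: gsubZ.
  have haU : a \in U.
    apply: (scaleU s) => //.
    have -> : s *: a = comb s t r - t *: b - r *: c.
      by rewrite comb_a comb_b comb_c !combZ !combB; congr comb; ring.
    by apply: gsubB => //; [apply: gsubB => //|]; apply: gsubZ.
  apply/subsetP=> _ /P3P[s' [t' [r' ->]]].
  by rewrite /comb; apply: (gsubD hU); [apply: (gsubD hU)|]; apply: (gsubZ _ hU).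
have hcU : c \in U.
  have [y hy hy0] : exists2 y, y \in U :&: P3 & y != 0.
    case: (pickP [pred y | (y \in U :&: P3) && (y != 0)]) => [y /andP[h1 h2]|hnone].
      by exists y.
    case/negP: hne; apply/eqP/setP=> y; apply/idP/idP => hy.
      by have := hnone y; rewrite /= hy /= => /negbFE/eqP ->; rewrite inE.
    by move: hy; rewrite inE => /eqP ->; rewrite inE !gsub0 // gsubP3.
  move: hy; rewrite in_setI => /andP[hyU /P3P[s [t [r hst]]]].
  move: hyU hy0; rewrite hst => hyU hy0.
  have s0 := noa _ _ _ hyU; move: hyU hy0; rewrite s0 => hyU hy0.
  case: (eqVneq t 0) => ht.
    move: hyU hy0; rewrite ht => hyU hy0.
    have hr : r != 0 by apply: contraNneq hy0 => ->; rewrite -comb_0.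
    by apply: (scaleU r) => //; rewrite comb_c combZ !mulr0 mulr1.
  have := hTU _ hyU; rewrite combT => h.
  by apply: (scaleU t) => //; rewrite comb_c combZ !mulr0 mulr1.
case: (boolP (b \in U)) => hbU; [right|left]; apply/setP=> y; rewrite in_setI.
- apply/andP/PbcP.
    case=> hyU /P3P[s [t [r hy]]]; move: hyU; rewrite hy => hyU.
    by rewrite (noa _ _ _ hyU); exists t, r.
  case=> t [r ->]; split; last exact: P3_in.
  by rewrite /comb scale0r add0r; apply: gsubD => //; apply: gsubZ.
- apply/andP/LcP.
    case=> hyU /P3P[s [t [r hy]]]; move: hyU; rewrite hy => hyU.
    have s0 := noa _ _ _ hyU; move: hyU; rewrite s0 => hyU.
    case: (eqVneq t 0) => ht; first by rewrite ht; exists r.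
    case/negP: hbU; apply: (scaleU t) => //.
    have -> : t *: b = comb 0 t r - r *: c.
      by rewrite comb_b comb_c !combZ combB; congr comb; ring.
    by apply: gsubB => //; apply: gsubZ.
  case=> r ->; split; last exact: P3_in.
  by rewrite /comb !scale0r !add0r; apply: gsubZ.
Qed.


Lemma m11_eq0 (M : 'M[F]_1) : (M == 0) = (M 0 0 == 0).
Proof.
apply/eqP/eqP=> [->|h]; first by rewrite mxE.
by rewrite [M]mx11_scalar h; apply/matrixP=> i j; rewrite !mxE mul0rn.
Qed.

Lemma entry2 (M N : 'M[F]_1) (k1 k2 : F) : (k1 *: M + k2 *: N) 0 0 = k1 * M 0 0 + k2 * N 0 0.
Proof. by rewrite !mxE. Qed.

Lemma e00_0 : (0 : 'M[F]_1) 0 0 = 0. Proof. by rewrite mxE. Qed.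
Lemma e00_1 : (1%:M : 'M[F]_1) 0 0 = 1. Proof. by rewrite mxE. Qed.

Lemma combWm (w : 'cV[F]_n) s t r :
  comb s t r *m w = (s * (a *m w) 0 0 + t * (b *m w) 0 0 + r * (c *m w) 0 0)%:M.
Proof. by rewrite {1}[comb s t r *m w]mx11_scalar combW. Qed.

Lemma gvalc (w : 'cV[F]_n) s t r s' t' r' :
  comb s t r *m gm w (comb s' t' r') =
  comb (s + (comb s t r *m w) 0 0 * s') (t + (comb s t r *m w) 0 0 * t') (r + (comb s t r *m w) 0 0 * r').
Proof. by rewrite gval combZ combD. Qed.

Lemma full3 : (#|Full P3| <= #|Cls P3 Pbc|)%N.
Proof.
have : ~~ (a <= col_mx b c)%MS.
  apply/negP=> /in_span2[t [r ht]].
  have e : comb 1 0 0 = comb 0 t r by rewrite -comb_a /comb scale0r add0r.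
  by have [/eqP] := comb_inj e; rewrite oner_eq0.
case/sepw=> th [/col2_w[hbth hcth] hath].
have -> : Pbc = [set y in P3 | y *m th == 0%R].
  apply/setP=> y; rewrite [in RHS]inE m11_eq0.
  apply/PbcP/andP.
    case=> t [r ->]; split; first exact: P3_in.
    by rewrite combW hath hbth hcth e00_0 e00_1 !mulr0 mul0r !addr0.
  case=> /P3P[s [t [r ->]]]; rewrite combW hath hbth hcth e00_0 e00_1 !mulr0 mulr1 !addr0.
  by move=> /eqP ->; exists t, r.
by apply: (full_le (a:=a)) => //; rewrite comb_a P3_in.
Qed.

Lemma mid3 : (#|{: F * F}| * #|Cls P3 Lc| + #|{: F * F}| * #|Cls P3 Pbc| <= #|Mid P3|)%N.
Proof.
have : ~~ (c <= col_mx a b)%MS.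
  apply/negP=> /in_span2[s [t ht]].
  have e : comb 0 0 1 = comb s t 0 by rewrite -comb_c /comb scale0r addr0.
  by have [_ _ /eqP] := comb_inj e; rewrite oner_eq0.
case/sepw=> wc [/col2_w[hawc hbwc] hcwc].
have : ~~ (b <= col_mx a c)%MS.
  apply/negP=> /in_span2[s [t ht]].
  have e : comb 0 1 0 = comb s 0 t by rewrite -comb_b /comb scale0r addr0.
  by have [_ /eqP] := comb_inj e; rewrite oner_eq0.
case/sepw=> wb [/col2_w[hawb hcwb] hbwb].
pose w1 (j : F * F) := wc.
pose z1 (j : F * F) := comb j.1 j.2 0.
have hz1P j : z1 j \in P3 by apply: P3_in.
have hz1w j : z1 j *m w1 j = 0.
  rewrite combWm hawc hbwc hcwc e00_0 e00_1 !mulr0 mul0r !addr0.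
  by apply/matrixP=> i k; rewrite !mxE mul0rn.
have hw1 (j : F * F) r : (comb 0 0 r *m w1 j) 0 0 = r.
  by rewrite combW hawc hbwc hcwc e00_0 e00_1 !mul0r mulr1 !add0r.
have img1 (j : F * F) r : comb 0 0 r *m gm (w1 j) (z1 j) = comb (r * j.1) (r * j.2) r.
  by rewrite gvalc hw1 !add0r mulr0 addr0.
have mem1 j u : u \in imgm (gm (w1 j) (z1 j)) Lc -> exists r, u = comb (r * j.1) (r * j.2) r.
  by case/imsetP=> _ /LcP[r ->] ->; exists r; rewrite img1.
have in1 j : comb j.1 j.2 1 \in imgm (gm (w1 j) (z1 j)) Lc.
  by apply/imsetP; exists (comb 0 0 1); [apply/LcP; exists 1|rewrite img1 !mul1r].
have hinj1 : injective (fun j => imgm (gm (w1 j) (z1 j)) Lc).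
  move=> [s t] [s' t'] /= he.
  have := in1 (s, t); rewrite he => /mem1[r /comb_inj[/= h1 h2 h3]].
  by rewrite h1 h2 -h3 !mul1r.
pose w2 (j : F * F) := j.1 *: wb + j.2 *: wc.
pose z2 (j : F * F) := a.
have hz2P j : z2 j \in P3 by rewrite /z2 comb_a P3_in.
have hz2w j : z2 j *m w2 j = 0.
  by rewrite /z2 /w2 mulmxDr -!scalemxAr hawb hawc !scaler0 addr0.
have hw2 (j : F * F) t r : (comb 0 t r *m w2 j) 0 0 = t * j.1 + r * j.2.
  rewrite combW /w2 !mulmxDr -!scalemxAr !entry2 hawb hawc hbwb hbwc hcwb hcwc.
  by rewrite !e00_0 !e00_1; ring.
have img2 (j : F * F) t r : comb 0 t r *m gm (w2 j) (z2 j) = comb (t * j.1 + r * j.2) t r.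
  by rewrite /z2 comb_a gvalc hw2 !mulr0 !addr0 mulr1 add0r.
have mem2 j u : u \in imgm (gm (w2 j) (z2 j)) Pbc -> exists t r, u = comb (t * j.1 + r * j.2) t r.
  by case/imsetP=> _ /PbcP[t [r ->]] ->; exists t, r; rewrite img2.
have inb2 j : comb j.1 1 0 \in imgm (gm (w2 j) (z2 j)) Pbc.
  apply/imsetP; exists (comb 0 1 0); first by apply/PbcP; exists 1, 0.
  by rewrite img2 mul1r mul0r addr0.
have inc2 j : comb j.2 0 1 \in imgm (gm (w2 j) (z2 j)) Pbc.
  apply/imsetP; exists (comb 0 0 1); first by apply/PbcP; exists 0, 1.
  by rewrite img2 mul1r mul0r add0r.
have hinj2 : injective (fun j => imgm (gm (w2 j) (z2 j)) Pbc).
  move=> [s t] [s' t'] /= he.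
  have := inb2 (s, t); rewrite he => /mem2[u [r /comb_inj[/= h1 h2 h3]]].
  have := inc2 (s, t); rewrite he => /mem2[u' [r' /comb_inj[/= h1' h2' h3']]].
  rewrite h1 h1' -h2 -h3 -h2' -h3'; congr (_, _); ring.
have hc1 := famImg_card gsubP3 hz1P hz1w hinj1.
have hc2 := famImg_card gsubP3 hz2P hz2w hinj2.
have hI1 := famImgP gsubP3 hz1P hz1w (X := Lc).
have hI2 := famImgP gsubP3 hz2P hz2w (X := Pbc).
have hdisj : [disjoint famImg P3 w1 z1 Lc & famImg P3 w2 z2 Pbc].
  apply: disjointI => W /hI1[_ [j1 h1]] /hI2[_ [j2 h2]].
  have := inb2 j2; rewrite -h2 h1 => /mem1[r /comb_inj[_ h3 h4]].
  by move: h3; rewrite -h4 mul0r => /eqP; rewrite oner_eq0.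
have e1 : (#|{: F * F}| * #|Cls P3 Lc| + #|{: F * F}| * #|Cls P3 Pbc| =
    #|famImg P3 w1 z1 Lc :|: famImg P3 w2 z2 Pbc|)%N by rewrite (cardU_disj hdisj) hc1 hc2.
rewrite e1; apply: subset_leq_card.
have haP : a \in P3 by rewrite comb_a P3_in.
apply/subsetP=> W; rewrite in_setU => /orP[/hI1[hW [j hj]]|/hI2[hW [j hj]]];
  apply: Mid_of => //; rewrite hj.
- apply/eqP=> h0; have := in1 j; rewrite h0 in_set1 comb_0 => /eqP/comb_inj[_ _ /eqP].
  by rewrite oner_eq0.
- apply/negP=> /subsetP /(_ a haP) /mem1[r]; rewrite comb_a => /comb_inj[h1 _ h3].
  by move: h1; rewrite -h3 mul0r => /eqP; rewrite oner_eq0.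
- apply/eqP=> h0; have := inb2 j; rewrite h0 in_set1 comb_0 => /eqP/comb_inj[_ /eqP].
  by rewrite oner_eq0.
- apply/negP=> /subsetP /(_ a haP) /mem2[t [r]]; rewrite comb_a => /comb_inj[h1 h2 h3].
  by move: h1; rewrite -h2 -h3 !mul0r addr0 => /eqP; rewrite oner_eq0.
Qed.

Lemma notP3 : (4 <= n)%N -> exists v, v \notin P3.
Proof.
move=> hn; case: (pickP [pred v | v \notin P3]) => [v hv|hnone]; first by exists v.
exfalso.
have h1 : ([set: V] \subset P3) by apply/subsetP=> v _; have := hnone v; rewrite /= => /negbFE.
have h2 : (#|P3| <= #|F| ^ 3)%N.
  pose f (st : F * F * F) := comb st.1.1 st.1.2 st.2.
  have -> : (#|F| ^ 3 = #|{: F * F * F}|)%N by rewrite !card_prod; ring.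
  rewrite -cardsT; apply: leq_trans (leq_imset_card f _).
  by apply: subset_leq_card; apply/subsetP=> _ /P3P[s [t [r ->]]]; apply/imsetP; exists (s, t, r).
have := leq_trans (subset_leq_card h1) h2; rewrite cardsT card_mx mul1n.
have hF := card_F_gt1 F.
by rewrite leq_exp2l // => h3; move: (leq_trans hn h3).
Qed.

Theorem bound3 : (4 <= n)%N ->
  (#|F| * #|F| * #|Inv T| <= 2 * #|[set U : {set V} | gsub U]|)%N.
Proof.
move=> hn.
pose x (j : F * F) := comb j.1 j.2 0.
have hxP j : x j \in P3 by apply: P3_in.
have hxinj (mu : F) : injective (fun j => T (x j) - mu *: x j).
  move=> [s t] [s' t'] /=; rewrite /x !combT !combZ !combB /=.
  case/comb_inj=> _ h2; rewrite !mulr0 !subr0 => h3; subst t'; congr (_, _).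
  by move/addIr: h2.
have dc := dc_bound hT gsubP3 TP3 sepP3 hxP hxinj.
have [v hv] := notP3 hn.
have hs0 : (#|{: F * F}| <= #|S0 P3|)%N.
  apply: (S0_lb gsubP3 hv hxP) => [[s t] [s' t']]; rewrite /x => /comb_inj[/= -> -> _] //.
have hfull := full3.
have hmid := mid3.
have a0 : a != 0 := a3_neq0.
set S := [set U : {set V} | gsub U].
have hInv : (#|Inv T| <= 1 + #|Inv T :&: S0 P3| + #|Cls P3 Lc| + #|Cls P3 Pbc| + #|Full P3|)%N.
  have hsub : Inv T \subset [set [set 0 : V]] :|: (Inv T :&: S0 P3) :|: Cls P3 Lc :|: Cls P3 Pbc :|: Full P3.
    apply/subsetP=> U hU; have [hUs _] := InvP hU.
    rewrite !in_setU.
    case: (boolP (U :&: P3 == [set 0])) => hUP.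
      case: (boolP (U == [set 0])) => hU0.
        by rewrite (eqP hU0) in_set1 eqxx.
      by rewrite in_setI hU [U \in S0 _]inE hUs hUP hU0 /= orbT.
    case: (boolP (P3 \subset U)) => hPU; first by rewrite [U \in Full _]inE hUs hPU !orbT.
    case: (classify3 hU hUP hPU) => e.
      by rewrite [U \in Cls _ Lc]inE e eqxx hUs !orbT.
    by rewrite [U \in Cls _ Pbc]inE e eqxx hUs !orbT.
  apply: leq_trans (subset_leq_card hsub) _.
  apply: leq_trans (cardU_le _ _) _; rewrite leq_add2r.
  apply: leq_trans (cardU_le _ _) _; rewrite leq_add2r.
  apply: leq_trans (cardU_le _ _) _; rewrite leq_add2r.
  by apply: leq_trans (cardU_le _ _) _; rewrite cards1.
have hS : (1 + #|S0 P3| + #|Mid P3| + #|Full P3| <= #|S|)%N.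
  have z0 : [set 0 : V] :&: P3 = [set 0].
    apply/setP=> y; rewrite in_setI in_set1; case: eqP => // ->.
    by rewrite gsub0 // gsubP3.
  have haP : a \in P3 by rewrite comb_a P3_in.
  have d1 : [disjoint [set [set 0 : V]] & S0 P3].
    by rewrite disjoints1 [_ \in S0 _]inE eqxx !andbF.
  have d2 : [disjoint [set [set 0 : V]] :|: S0 P3 & Mid P3].
    apply: disjointI => U; rewrite in_setU in_set1 [U \in S0 _]inE [U \in Mid _]inE.
    move=> /orP[/eqP->|/and3P[_ /eqP-> _]] /and3P[_ h _].
      by move: h; rewrite z0 eqxx.
    by rewrite eqxx in h.
  have d3 : [disjoint [set [set 0 : V]] :|: S0 P3 :|: Mid P3 & Full P3].
    apply: disjointI => U; rewrite !in_setU in_set1 [U \in S0 _]inE [U \in Mid _]inE.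
    rewrite [U \in Full _]inE => + /andP[_ hPU].
    move=> /orP[/orP[/eqP hU|/and3P[_ /eqP h _]]|/and3P[_ _ h]].
    - have : a \in U by apply: (subsetP hPU).
      by rewrite hU in_set1 (negbTE a0).
    - have : a \in U :&: P3 by rewrite in_setI (subsetP hPU).
      by rewrite h in_set1 (negbTE a0).
    - by rewrite hPU in h.
  have hc : #|[set [set 0 : V]] :|: S0 P3 :|: Mid P3 :|: Full P3| =
     (1 + #|S0 P3| + #|Mid P3| + #|Full P3|)%N.
    by rewrite (cardU_disj d3) (cardU_disj d2) (cardU_disj d1) cards1.
  rewrite -hc.
  apply: subset_leq_card; apply/subsetP=> U; rewrite !in_setU in_set1 [U \in S0 _]inE.
  rewrite [U \in Mid _]inE [U \in Full _]inE [U \in S]inE.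
  move=> /orP[/orP[/orP[/eqP->|/and3P[->//]]|/and3P[->//]]|/andP[->//]].
  exact: gsub_set0.
rewrite card_prod in dc hs0 hmid.
have h1 := leq_mul (leqnn (#|F| * #|F|)) hInv.
have h2 := leq_mul (leqnn (#|F| * #|F|)) hfull.
rewrite !mulnDr muln1 in h1.
move: hInv hS h1 h2 hmid hs0 dc hfull; clear.
move: (#|F| * #|F|)%N => q; move: #|Inv T| => i; move: #|Inv T :&: S0 P3| => i0.
move: #|Cls P3 Lc| => c1; move: #|Cls P3 Pbc| => c2; move: #|Full P3| => f.
move: #|S0 P3| => s0; move: #|Mid P3| => m; move: #|S| => s.
nia.
Qed.

End K3.


Section Alg.
Variables (p n : nat).
Local Notation V := 'rV['F_p]_n.
Variable mul : V -> V -> V.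
Hypothesis halg : is_comm_alg mul.

Lemma mulDl (a : 'F_p) x y z : mul (a *: x + y) z = a *: mul x z + mul y z.
Proof. by case: halg. Qed.
Lemma mulC x y : mul x y = mul y x.
Proof. by case: halg. Qed.
Lemma mulA x y z : mul x (mul y z) = mul (mul x y) z.
Proof. by case: halg. Qed.
Lemma mulDr (a : 'F_p) x y z : mul z (a *: x + y) = a *: mul z x + mul z y.
Proof. by rewrite mulC mulDl (mulC x) (mulC y). Qed.
Lemma mulD x y z : mul (x + y) z = mul x z + mul y z.
Proof. by have := mulDl 1 x y z; rewrite !scale1r. Qed.
Lemma mulDr' x y z : mul z (x + y) = mul z x + mul z y.
Proof. by rewrite mulC mulD !(mulC z). Qed.

Lemma mulr0' z : mul z 0 = 0.
Proof.
have := mulDr 1 0 0 z; rewrite scaler0 !addr0 scale1r.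
by move/(congr1 (fun w => w - mul z 0)); rewrite subrr addrK.
Qed.
Lemma mulZr (a : 'F_p) x z : mul z (a *: x) = a *: mul z x.
Proof. by rewrite -[a *: x]addr0 mulDr mulr0' addr0. Qed.

Lemma in_pow k x (t : (k.-1).-tuple V) : foldl mul x (tval t) \in alg_pow mul k.
Proof.
apply: memv_span; apply: (allpairs_f (fun x (s : (k.-1).-tuple V) => foldl mul x (tval s))).
  by rewrite mem_enum.
by rewrite mem_enum in_setT.
Qed.

Lemma pow0 k x (t : (k.-1).-tuple V) : alg_pow mul k = 0%VS -> foldl mul x (tval t) = 0.
Proof. by move=> h; apply/eqP; rewrite -memv0 -h in_pow. Qed.

Lemma pow_ne0 k : alg_pow mul k != 0%VS ->
  exists x (t : (k.-1).-tuple V), foldl mul x (tval t) != 0.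
Proof.
move=> h.
case: (pickP [pred v | (v \in [seq foldl mul x (tval s) | x <- enum V,
                                   s <- enum [set: (k.-1).-tuple V]]) && (v != 0)]).
  move=> v /andP[/allpairsP[[x t] [_ _ /= ->]] hv]; by exists x, t.
move=> hnone; case/negP: h; rewrite -subv0; apply/span_subvP=> v hv.
by rewrite memv0; have := hnone v; rewrite /= hv /= => /negbFE.
Qed.

Lemma ideal_inv x : [set U | is_ideal mul U] \subset Inv (mul x).
Proof.
apply/subsetP=> U; rewrite inE => /andP[hU /forallP hI].
apply: InvI; first exact: hU.
by move=> u hu; move/forall_inP: (hI x) => /(_ u hu).
Qed.

Lemma card_sub : num_subspaces p n = #|[set U : {set V} | gsub U]|.
Proof. by []. Qed.

End Alg.

Lemma rat_ineq (i s q : nat) : (0 < q)%N -> (q * i <= 2 * s)%N ->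
  (i%:R : rat) <= (2%:R / q%:R) * s%:R.
Proof.
move=> hq h; rewrite mulrAC ler_pdivlMr ?ltr0n //.
by rewrite -!natrM ler_nat mulnC.
Qed.

Unset Implicit Arguments.

Theorem proposition2p9 (p n : nat) (hp : prime p)
  (mul : 'rV['F_p]_n -> 'rV['F_p]_n -> 'rV['F_p]_n)
  (halg : is_comm_alg mul)
  (hAp : alg_pow mul p = 0%VS)
  (e : nat) (he1 : (1 <= e)%N)
  (he : alg_pow mul e != 0%VS) (he' : alg_pow mul e.+1 = 0%VS) :
  (e = 2%N -> (3 <= p)%N -> (3 <= n)%N ->
     (num_ideals mul)%:R <= (2%:R / p%:R) * (num_subspaces p n)%:R :> rat) /\
  (e = 3%N -> (3 <= p)%N -> (4 <= n)%N ->
     (num_ideals mul)%:R <= (2%:R / (p ^ 2)%N%:R) * (num_subspaces p n)%:R :> rat).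
Proof.
have hq : #|'F_p| = p := card_Fp hp.
have hp0 : (0 < p)%N := prime_gt0 hp.
have hTlin x : forall (a : 'F_p) u w, mul x (a *: u + w) = a *: mul x u + mul x w.
  by move=> a u w; rewrite mulDr.
split=> he2 hp3 hn; subst e.
- have [x [t ht]] := pow_ne0 he.
  case: t ht => -[|y []] //= _ hxy.
  have hxxy : mul x (mul x y) = 0.
    rewrite mulA; have := @pow0 p n mul 3 x [tuple x; y] he'; by [].
  have hind : forall s t : 'F_p, s *: y + t *: mul x y = 0 -> s = 0 /\ t = 0.
    move=> s t h.
    have h2 : s *: mul x y = 0.
      have := congr1 (mul x) h; rewrite (mulDr' halg) !(mulZr halg) hxxy (mulr0' halg).
      by rewrite scaler0 !addr0.
    have hs : s = 0 by move/eqP: h2; rewrite scaler_eq0 (negbTE hxy) orbF => /eqP.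
    split=> //; move: h; rewrite hs scale0r add0r => /eqP.
    by rewrite scaler_eq0 (negbTE hxy) orbF => /eqP.
  have hb := bound2 (hTlin x) erefl hxxy hind hn.
  apply: rat_ineq => //.
  rewrite hq in hb; rewrite card_sub; apply: leq_trans hb; rewrite leq_mul2l.
  by rewrite subset_leq_card ?orbT // ideal_inv.
- have [x0 [t ht]] := pow_ne0 he.
  case: t ht => -[|y [|z []]] //= _ hxyz.
  have hmD := mulD halg; have hmDr := mulDr' halg; have hmA := mulA halg.
  have hmC := mulC halg; have hmZ := mulZr halg; have hm0 := mulr0' halg.
  have [u [v huv]] : exists u v, mul u (mul u v) != 0.
    case: (pickP [pred uv : 'rV['F_p]_n * 'rV['F_p]_n | mul uv.1 (mul uv.1 uv.2) != 0]).
      by move=> [u v] h; exists u, v.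
    move=> hnone; exfalso.
    have H u v : mul u (mul u v) = 0 by have := hnone (u, v); rewrite /= => /negbFE/eqP.
    have e1 := H (x0 + y) z.
    rewrite !hmD !hmDr !H add0r addr0 in e1.
    move: e1; rewrite hmA (hmA y) (hmC y x0) => e1.
    have h2 : (2%:R : 'F_p) *: mul (mul x0 y) z = 0 by rewrite scaler_nat mulr2n.
    move: h2 => /eqP; rewrite scaler_eq0 (negbTE hxyz) orbF => /eqP h2.
    have := val_Fp_nat hp 2; rewrite h2 modn_small //.
  set b := mul u v; set c := mul u b.
  have hTc : mul u c = 0.
    have := @pow0 p n mul 4 u [tuple u; u; v] he'; rewrite /= => <-.
    by rewrite /c /b !hmA.
  have hind : forall s t r : 'F_p, s *: v + t *: b + r *: c = 0 -> [/\ s = 0, t = 0 & r = 0].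
    move=> s t r h.
    have h1 := congr1 (mul u) h; rewrite !hmDr !hmZ hTc hm0 scaler0 addr0 -/b -/c in h1.
    have h2 := congr1 (mul u) h1; rewrite !hmDr !hmZ hTc hm0 scaler0 addr0 -/b -/c in h2.
    have hs : s = 0 by move/eqP: h2; rewrite scaler_eq0 (negbTE huv) orbF => /eqP.
    move: h1; rewrite hs scale0r add0r => /eqP; rewrite scaler_eq0 (negbTE huv) orbF => /eqP ht.
    move: h; rewrite hs ht !scale0r !add0r => /eqP; rewrite scaler_eq0 (negbTE huv) orbF => /eqP hr.
    by [].
  have hb := bound3 (hTlin u) erefl erefl hTc hind hn.
  apply: rat_ineq; first by rewrite expn_gt0 hp0.
  rewrite hq mulnn in hb; rewrite card_sub; apply: leq_trans hb; rewrite leq_mul2l.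
  by rewrite subset_leq_card ?orbT // ideal_inv.
Qed.
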